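(* Let $\mathcal{B}^*$ be the three-receiver unicast index coding problem described in the context, with equivalent single unicast side information graph $G^*$ and underlying undirected graph $G^*_u$. Then $$\beta^*_{\mathcal{B}^*}(1)=\bar{\chi}_f(G^*_u)=\bar{\chi}(G^*_u)=7,$$ where $\bar{\chi}_f$ and $\bar{\chi}$ denote the fractional clique cover number and the clique cover number, respectively.
   Context: Index coding model. A unicast index coding problem has $n$ receivers $u_1,\dots,u_n$ and $N$ messages $\mathbf{x}_1,\dots,\mathbf{x}_N$, each a vector in $\mathcal{A}^m$ for a finite alphabet $\mathcal{A}$ and a positive integer $m$ (the message length; all messages have the same length). Receiver $u_i$ demands $\mathbf{x}_j$, $j\in W_i$, and knows $\mathbf{x}_j$, $j\in K_i$, as side information, where $W_i,K_i\subseteq[N]$, $W_i\cap K_i=\emptyset$, the $W_i$ are pairwise disjoint and every message is demanded by exactly one receiver. An index code consists of an encoder mapping $(\mathbf{x}_1,\dots,\mathbf{x}_N)$ to a codeword $\mathbf{c}\in\mathcal{A}^\ell$, subsets $R_i\subseteq[\ell]$ (receiver $u_i$ observes only $\mathbf{c}_{R_i}$), and decoders at each $u_i$ mapping $(\mathbf{c}_{R_i},\mathbf{x}_{K_i})$ to $\mathbf{x}_{W_i}$. It is valid if every receiver decodes its demand correctly for all message values. Its broadcast rate is $\beta=\ell/m$. The locality at $u_i$ is $r_i=|R_i|/(m|W_i|)$ and the locality of the code is $r=\max_i r_i$. For a problem $\mathcal{B}$, $\beta^*_{\mathcal{B}}(r)$ is the infimum of broadcast rates of all valid index codes, over all message lengths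 $m\ge1$, with locality at most $r$. The problem $\mathcal{B}^*$: three receivers $u_1,u_2,u_3$ and 12 messages with $W_1=\{1,2,3,4\}$, $W_2=\{5,6,7,8\}$, $W_3=\{9,10,11,12\}$, $K_1=\{5,6,9,10\}$, $K_2=\{1,2,9,11\}$, $K_3=\{1,3,5,7\}$. $G^*$ is the directed graph on $[12]$ with a directed edge $(a,b)$ iff $b\in K_i$ where $a\in W_i$. $G^*_u$ is the undirected graph on $[12]$ with $\{a,b\}$ an edge iff both $(a,b)$ and $(b,a)$ are edges of $G^*$. *)

(* Defs.v *)
From HB Require Import structures.
From mathcomp Require Import all_boot all_order all_algebra.
From mathcomp Require Import boolp classical_sets reals.
Set Implicit Arguments. Unset Strict Implicit. Unset Printing Implicit Defensive.
Import Order.TTheory GRing.Theory Num.Theory.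

Local Open Scope ring_scope.

(* A problem: n receivers, N messages, demand sets W i and side-information
   sets K i (messages are indexed by 'I_N, i.e. message j+1 of the paper is j). *)

Section IndexCode.
Variables (n N : nat) (W K : 'I_n -> {set 'I_N}).

(* The decoder of receiver i
   only gets the codeword symbols indexed by Rs i and the messages indexed by
   K i; it must output every demanded message (indexed by W i). *)
Definition valid_index_code (A : Type) (m l : nat)
  (enc : ('I_N -> 'I_m -> A) -> ('I_l -> A))
  (Rs : 'I_n -> {set 'I_l})
  (dec : forall i : 'I_n,
           (forall k : 'I_l, k \in Rs i -> A) ->
           (forall j : 'I_N, j \in K i -> 'I_m -> A) ->
           (forall j : 'I_N, j \in W i -> 'I_m -> A)) : Prop :=
  forall (x : 'I_N -> 'I_m -> A) (i : 'I_n) (j : 'I_N) (hj : j \in W i) (t : 'I_m),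
    dec i (fun k _ => enc x k) (fun j' _ => x j') j hj t = x j t.

Definition locality_le (R : realType) (m l : nat) (Rs : 'I_n -> {set 'I_l}) (r : R) :=
  forall i : 'I_n, (#|Rs i|%:R / (m * #|W i|)%:R : R) <= r.

Definition rates_locality (R : realType) (r : R) : set R :=
  [set b | exists (A : finType) (m l : nat)
             (enc : ('I_N -> 'I_m -> A) -> ('I_l -> A))
             (Rs : 'I_n -> {set 'I_l})
             (dec : forall i : 'I_n,
                      (forall k : 'I_l, k \in Rs i -> A) ->
                      (forall j : 'I_N, j \in K i -> 'I_m -> A) ->
                      (forall j : 'I_N, j \in W i -> 'I_m -> A)),
       [/\ (1 < #|A|)%N, (0 < m)%N, @valid_index_code A m l enc Rs dec,
           @locality_le R m l Rs r & b = l%:R / m%:R]]%classic.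

Definition beta_star (R : realType) (r : R) : R := inf (rates_locality r).

Definition side_info_edge : rel 'I_N :=
  fun a b => [exists i : 'I_n, (a \in W i) && (b \in K i)].

Definition und_edge : rel 'I_N :=
  fun a b => side_info_edge a b && side_info_edge b a.

End IndexCode.

Section Cliques.
Variables (T : finType) (adj : rel T).

Definition is_clique (C : {set T}) : bool :=
  [forall x in C, forall y in C, (x != y) ==> adj x y].

Definition clique_cover (P : {set {set T}}) : bool :=
  [forall C in P, is_clique C] && (finset.cover P == [set: T]).

Lemma clique_cover_exists : exists k, [exists P : {set {set T}}, clique_cover P && (#|P| == k)].
Proof.
exists #|[set [set x] | x : T]|; apply/existsP; exists [set [set x] | x : T].
rewrite eqxx andbT; apply/andP; split.
  apply/forall_inP => C /imsetP [x _ ->]; apply/forall_inP => y /set1P ->.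
  by apply/forall_inP => z /set1P ->; rewrite eqxx.
apply/eqP/setP => y; rewrite finset.in_setT; apply/bigcupP; exists [set y]; last exact: set11.
by apply/imsetP; exists y.
Qed.

Definition clique_cover_number : nat := ex_minn clique_cover_exists.

Definition frac_clique_covers (R : realType) : set R :=
  [set s | exists w : {set T} -> R,
     [/\ forall C, 0 <= w C,
         forall v : T, 1 <= \sum_(C : {set T} | is_clique C && (v \in C)) w C
       & s = \sum_(C : {set T} | is_clique C) w C]]%classic.

Definition frac_clique_cover_number (R : realType) : R := inf (@frac_clique_covers R).

End Cliques.

(* receivers u_1,u_2,u_3 are 0,1,2 ; message j of the paper is j-1 *)
Definition setI12 (s : seq nat) : {set 'I_12} := [set j : 'I_12 | val j \in s].

Definition Wstar (i : 'I_3) : {set 'I_12} :=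
  match val i with
  | 0 => setI12 [:: 0; 1; 2; 3]%N
  | 1 => setI12 [:: 4; 5; 6; 7]%N
  | _ => setI12 [:: 8; 9; 10; 11]%N
  end.

Definition Kstar (i : 'I_3) : {set 'I_12} :=
  match val i with
  | 0 => setI12 [:: 4; 5; 8; 9]%N
  | 1 => setI12 [:: 0; 1; 8; 10]%N
  | _ => setI12 [:: 0; 2; 4; 6]%N
  end.

Definition Gstar_u : rel 'I_12 := und_edge Wstar Kstar.

(* Main.v *)
Require Import Defs.
From HB Require Import structures.
From mathcomp Require Import all_boot all_order all_algebra.
From mathcomp Require Import boolp classical_sets reals.
Import Order.TTheory GRing.Theory Num.Theory.

Definition Wl (n : nat) : seq nat :=
  match n with 0 => [:: 0; 1; 2; 3] | 1 => [:: 4; 5; 6; 7] | _ => [:: 8; 9; 10; 11] end.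
Definition Kl (n : nat) : seq nat :=
  match n with 0 => [:: 4; 5; 8; 9] | 1 => [:: 0; 1; 8; 10] | _ => [:: 0; 2; 4; 6] end.
Definition gside (a b : nat) : bool := has (fun i => (a \in Wl i) && (b \in Kl i)) (iota 0 3).
Definition gnat (a b : nat) : bool := gside a b && gside b a.
Definition Il : seq nat := [:: 0; 1; 2; 3; 6; 7; 11].
Definition Ls : seq (seq nat) := [:: [:: 3]; [:: 7]; [:: 11]; [:: 0; 4; 8]; [:: 1; 5]; [:: 2; 9]; [:: 6; 10]].

Lemma in_setI12 (j : 'I_12) s : (j \in setI12 s) = (val j \in s).
Proof. by rewrite /setI12 inE. Qed.

Lemma WstarE i : Wstar i = setI12 (Wl (val i)).
Proof. by rewrite /Wstar; case: (val i) => [|[|]]. Qed.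
Lemma KstarE i : Kstar i = setI12 (Kl (val i)).
Proof. by rewrite /Kstar; case: (val i) => [|[|]]. Qed.

Lemma GE (x y : 'I_12) : Gstar_u x y = gnat (val x) (val y).
Proof.
have SE : forall a b : 'I_12, side_info_edge Wstar Kstar a b = gside (val a) (val b).
  move=> a b; rewrite /side_info_edge /gside.
  apply/existsP/hasP => [[i /andP[]]|[n]].
    rewrite WstarE KstarE !in_setI12 => ha hb; exists (val i); last by rewrite ha hb.
    by clear ha hb; case: i => [[|[|[|]]] ?].
  move=> hn /andP[ha hb]; exists (inord n).
  have hn3 : n < 3 by move: hn; rewrite !inE => /or3P [] /eqP ->.
  by rewrite WstarE KstarE !in_setI12 /= inordK // ha hb.
by rewrite /Gstar_u /und_edge !SE.
Qed.

Lemma check_indep : all (fun a => all (fun b => ~~ gnat a b) Il) Il.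
Proof. by []. Qed.
Lemma check_clique : all (fun l => all (fun a => all (fun b => (a != b) ==> gnat a b) l) l) Ls.
Proof. by []. Qed.
Lemma check_cover : all (fun a => has (fun l => a \in l) Ls) (iota 0 12).
Proof. by []. Qed.
Lemma check_head : all (fun i => all (fun j => (head 0 (nth [::] Ls i) \in nth [::] Ls j) ==> (i == j)) (iota 0 7)) (iota 0 7).
Proof. by []. Qed.
Lemma check_head12 : all (fun l => (head 0 l < 12) && (head 0 l \in l)) Ls.
Proof. by []. Qed.
Lemma check_Il : uniq Il && all (fun a => a < 12) Il.
Proof. by []. Qed.
Lemma card_setIn n (P : pred nat) : #|[set j : 'I_n | P (val j)]| = \sum_(0 <= a < n) P a.
Proof.
rewrite -sum1_card big_mkord big_mkcond /=; apply: eq_bigr => j _.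
by rewrite inE; case: (P j).
Qed.
Lemma cardW i : #|Wstar i| = 4.
Proof. rewrite WstarE /setI12 card_setIn; case: (val i) => [|[|]] /=; by rewrite unlock. Qed.

Local Open Scope ring_scope.

Definition iota7 (k : 'I_7) : 'I_12 := inord (nth 0%N Il k).
Definition Sc (k : 'I_7) : {set 'I_12} := setI12 (nth [::] Ls k).

Lemma val_iota7 k : val (iota7 k) = nth 0%N Il k.
Proof.
rewrite /iota7 /= inordK //; case/andP: check_Il => _ /allP; apply.
by rewrite mem_nth.
Qed.

Lemma iota7_inj : injective iota7.
Proof.
move=> k1 k2 /(congr1 val); rewrite !val_iota7 => h; apply: val_inj.
by rewrite /= -(@index_uniq _ 0%N k1 Il) // -(@index_uniq _ 0%N k2 Il) // h.
Qed.

Lemma iota7_indep k1 k2 : ~~ Gstar_u (iota7 k1) (iota7 k2).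
Proof.
rewrite GE !val_iota7.
have /allP/(_ (nth 0%N Il k1)) := check_indep; rewrite mem_nth // => /(_ isT) /allP; apply.
by rewrite mem_nth.
Qed.

Lemma sum_clique_le1 (R : realType) (C : {set 'I_12}) : is_clique Gstar_u C ->
  \sum_(k < 7) ((iota7 k \in C)%:R : R) <= 1.
Proof.
move=> /forall_inP hC.
case: (pickP (fun k => iota7 k \in C)) => [k0 hk0|none]; last first.
  by rewrite big1 // => k _; rewrite none.
rewrite (bigD1 k0) //= hk0 big1 ?addr0 // => k hk.
case hkC: (iota7 k \in C) => //.
have := hC _ hk0 => /forall_inP /(_ _ hkC) /implyP.
have hne : iota7 k0 != iota7 k by apply: contra hk => /eqP /iota7_inj ->.
by move=> /(_ hne); rewrite (negbTE (iota7_indep _ _)).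
Qed.

Lemma frac_lower (R : realType) (w : {set 'I_12} -> R) :
  (forall C, 0 <= w C) ->
  (forall v, 1 <= \sum_(C : {set 'I_12} | is_clique Gstar_u C && (v \in C)) w C) ->
  7 <= \sum_(C : {set 'I_12} | is_clique Gstar_u C) w C.
Proof.
move=> w0 wcov.
have -> : (7 : R) = \sum_(k < 7) (1 : R) by rewrite sumr_const card_ord.
apply: (le_trans (ler_sum _ (fun k _ => wcov (iota7 k)))).
have E : forall k, \sum_(C | is_clique Gstar_u C && (iota7 k \in C)) w C =
   \sum_(C | is_clique Gstar_u C) (iota7 k \in C)%:R * w C.
  move=> k; rewrite big_mkcondr /=; apply: eq_bigr => C _.
  by case: (iota7 k \in C); rewrite ?mul1r ?mul0r.
rewrite (eq_bigr _ (fun k _ => E k)) exchange_big /=.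
apply: ler_sum => C hC; rewrite -mulr_suml.
by apply: ler_piMl => //; apply: sum_clique_le1.
Qed.

Lemma Sc_clique k : is_clique Gstar_u (Sc k).
Proof.
apply/forall_inP => x hx; apply/forall_inP => y hy; apply/implyP => hxy.
rewrite GE; move: hx hy; rewrite /Sc !in_setI12 => hx hy.
have /allP/(_ (nth [::] Ls k)) := check_clique; rewrite mem_nth // => /(_ isT).
move=> /allP/(_ _ hx)/allP/(_ _ hy)/implyP; apply.
by apply: contra hxy => /eqP h; apply/eqP/val_inj.
Qed.

Lemma Sc_cov (v : 'I_12) : exists k, v \in Sc k.
Proof.
have /allP/(_ (val v)) := check_cover; rewrite mem_iota add0n ltn_ord => /(_ isT) hh.
have hf : (find (fun l => val v \in l) Ls < 7)%N by move: (hh); rewrite has_find.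
exists (Ordinal hf); rewrite /Sc in_setI12 /=.
exact: (nth_find [::] hh).
Qed.

Lemma Sc_inj : injective Sc.
Proof.
move=> k1 k2 h.
set a := head 0%N (nth [::] Ls k1).
have /andP [ha ha'] : (a < 12)%N && (a \in nth [::] Ls k1).
  by have /allP := check_head12; apply; rewrite mem_nth.
have h1 : (inord a : 'I_12) \in Sc k1 by rewrite /Sc in_setI12 /= inordK.
move: h1; rewrite h /Sc in_setI12 /= inordK // => h2.
have /allP/(_ (val k1)) := check_head; rewrite mem_iota add0n ltn_ord => /(_ isT).
move=> /allP/(_ (val k2)); rewrite mem_iota add0n ltn_ord => /(_ isT) /implyP /(_ h2).
by move=> /eqP h3; apply: val_inj.
Qed.

Definition P0 : {set {set 'I_12}} := Sc @: [set: 'I_7].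

Lemma P0_cover : clique_cover Gstar_u P0.
Proof.
apply/andP; split.
  by apply/forall_inP => C /imsetP [k _ ->]; apply: Sc_clique.
apply/eqP/setP => v; rewrite finset.in_setT; apply/bigcupP.
have [k hk] := Sc_cov v; exists (Sc k) => //; rewrite /P0; apply/imsetP; exists k => //; rewrite finset.in_setT.
Qed.

Lemma P0_card : #|P0| = 7%N.
Proof. by rewrite /P0 card_imset ?cardsT ?card_ord //; exact: Sc_inj. Qed.

Lemma cover_in_frac (R : realType) (P : {set {set 'I_12}}) : clique_cover Gstar_u P ->
  frac_clique_covers Gstar_u (#|P|%:R : R).
Proof.
move=> /andP [/forall_inP hcl /eqP hcov].
exists (fun C => (C \in P)%:R); split.
- by move=> C; rewrite ler0n.
- move=> v.
  have : v \in finset.cover P by rewrite hcov finset.in_setT.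
  move=> /bigcupP [C0 hC0 hv].
  rewrite (bigD1 C0) /=; last by rewrite hcl.
  by rewrite hC0 lerDl sumr_ge0 // => C _; rewrite ler0n.
- rewrite (eq_bigr (fun C => if C \in P then (1:R) else 0)); last first.
    by move=> C _; case: (C \in P).
  rewrite -big_mkcondr /= (eq_bigl (fun C => C \in P)); first by rewrite sumr_const.
  by move=> C /=; case hC: (C \in P); rewrite ?andbT ?andbF ?hcl.
Qed.

Lemma frac_lb (R : realType) (s : R) : frac_clique_covers Gstar_u s -> 7 <= s.
Proof. by move=> [w [w0 wcov ->]]; apply: frac_lower. Qed.

Lemma inf_eq7 (R : realType) (E : set R) : E 7 -> (forall s, E s -> 7 <= s) -> inf E = 7.
Proof.
move=> h7 hlb; apply/le_anti/andP; split.
  by apply: ge_inf => //; exists 7 => s /hlb.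
by apply: lb_le_inf => //; exists 7.
Qed.

Lemma frac_val (R : realType) : frac_clique_cover_number Gstar_u R = 7.
Proof.
apply: inf_eq7; last exact: frac_lb.
by have := @cover_in_frac R _ P0_cover; rewrite P0_card.
Qed.

Lemma ccn_val (R : realType) : clique_cover_number Gstar_u = 7%N.
Proof.
rewrite /clique_cover_number; case: ex_minnP => n /existsP [P /andP [hP /eqP <-]] hmin.
apply/eqP; rewrite eqn_leq; apply/andP; split.
  by apply: hmin; apply/existsP; exists P0; rewrite P0_cover P0_card.
have := @frac_lb R _ (@cover_in_frac R _ hP).
by rewrite -[7]/(7%:R) ler_nat.
Qed.

Definition Rl (n : nat) : seq nat :=
  match n with 0 => [:: 0; 3; 4; 5] | 1 => [:: 1; 3; 4; 6] | _ => [:: 2; 3; 5; 6] end.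

Definition encn (y : nat -> bool) (k : nat) : bool :=
  match k with
  | 0 => y 3 | 1 => y 7 | 2 => y 11 | 3 => y 0 (+) y 4 (+) y 8
  | 4 => y 1 (+) y 5 | 5 => y 2 (+) y 9 | _ => y 6 (+) y 10 end.

Definition decn (C S : nat -> bool) (a : nat) : bool :=
  match a with
  | 0 => C 3 (+) S 4 (+) S 8 | 1 => C 4 (+) S 5 | 2 => C 5 (+) S 9 | 3 => C 0
  | 4 => C 3 (+) S 0 (+) S 8 | 5 => C 4 (+) S 1 | 6 => C 6 (+) S 10 | 7 => C 1
  | 8 => C 3 (+) S 0 (+) S 4 | 9 => C 5 (+) S 2 | 10 => C 6 (+) S 6 | _ => C 2 end.

Lemma decn_ext C C' S S' a : C =1 C' -> S =1 S' -> decn C S a = decn C' S' a.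
Proof. by move=> hC hS; rewrite /decn !hC !hS. Qed.

Definition vv (n a : nat) : nat := if (a < n)%N then a else 0%N.

Lemma valid_nat (y : nat -> bool) (i a : nat) : (i < 3)%N -> a \in Wl i ->
  decn (fun a => if vv 7 a \in Rl i then encn y (vv 7 a) else false)
       (fun b => if vv 12 b \in Kl i then y b else false) a = y a.
Proof.
case: i => [|[|[|i]]] // _; rewrite /= !inE => /or4P [] /eqP -> /=;
  by repeat match goal with |- context [y ?a] => case: (y a) end.
Qed.

Lemma val_inord_gen n a : val (inord a : 'I_n.+1) = vv n.+1 a.
Proof.
rewrite /vv; case: ltnP => h; first by rewrite /= inordK.
by rewrite /= /inord /insubd insubN // -ltnNge.
Qed.

Definition getd (T : finType) (B : Type) (S : {set T}) (c : forall k, k \in S -> B) (d : B) (k : T) : B :=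
  (if k \in S as b return (k \in S = b -> B) then fun h => c k h else fun _ => d) (erefl (k \in S)).

Lemma getdE (T : finType) (B : Type) (S : {set T}) (f : T -> B) d k :
  @getd T B S (fun k _ => f k) d k = if k \in S then f k else d.
Proof. by rewrite /getd; generalize (erefl (k \in S)); case: (k \in S). Qed.

Definition enc (x : 'I_12 -> 'I_1 -> bool) (k : 'I_7) : bool :=
  encn (fun a => x (inord a) ord0) (val k).

Definition Rs (i : 'I_3) : {set 'I_7} := [set k : 'I_7 | val k \in Rl (val i)].

Definition dec (i : 'I_3) (c : forall k : 'I_7, k \in Rs i -> bool)
  (s : forall j : 'I_12, j \in Kstar i -> 'I_1 -> bool) (j : 'I_12) (_ : j \in Wstar i) (t : 'I_1) : bool :=
  decn (fun a => @getd _ _ _ c false (inord a)) (fun b => @getd _ _ _ s (fun _ => false) (inord b) t) (val j).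

Lemma code_valid : @valid_index_code 3 12 Wstar Kstar bool 1 7 enc Rs dec.
Proof.
move=> x i j hj t; rewrite (ord1 t) /dec.
set y := fun a => x (inord a) ord0.
have -> : x j ord0 = y (val j) by rewrite /y inord_val.
rewrite (@decn_ext _ (fun a => if vv 7 a \in Rl (val i) then encn y (vv 7 a) else false)
                 _ (fun b => if vv 12 b \in Kl (val i) then y b else false)).
- apply: valid_nat; first exact: ltn_ord.
  by rewrite WstarE in_setI12 in hj.
- move=> a; rewrite getdE /Rs inE val_inord_gen.
  by rewrite /enc val_inord_gen.
- move=> b; rewrite getdE KstarE in_setI12 val_inord_gen.
  by case: ifP.
Qed.

Lemma card_Rs i : #|Rs i| = 4%N.
Proof. rewrite /Rs card_setIn; case: (val i) => [|[|]] /=; by rewrite unlock. Qed.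

Lemma code_rate (R : realType) : rates_locality Wstar Kstar (1 : R) 7.
Proof.
exists bool, 1%N, 7%N, enc, Rs, dec; split => //.
- by rewrite card_bool.
- exact: code_valid.
- move=> i; rewrite card_Rs cardW mul1n divff //.
  by rewrite pnatr_eq0.
- by rewrite divr1.
Qed.

Section Lower.
Variables (A : finType) (m l : nat) (enc' : ('I_12 -> 'I_m -> A) -> ('I_l -> A))
  (Rs' : 'I_3 -> {set 'I_l})
  (dec' : forall i : 'I_3,
           (forall k : 'I_l, k \in Rs' i -> A) ->
           (forall j : 'I_12, j \in Kstar i -> 'I_m -> A) ->
           (forall j : 'I_12, j \in Wstar i -> 'I_m -> A)).
Hypothesis hv : @valid_index_code 3 12 Wstar Kstar A m l enc' Rs' dec'.

Lemma step (x1 x2 : 'I_12 -> 'I_m -> A) (i : 'I_3) : enc' x1 =1 enc' x2 ->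
  (forall j', j' \in Kstar i -> forall t, x1 j' t = x2 j' t) ->
  forall j, j \in Wstar i -> forall t, x1 j t = x2 j t.
Proof.
move=> he hK j hj t; rewrite -(hv x1 i j hj t) -(hv x2 i j hj t).
have -> : (fun k (_ : k \in Rs' i) => enc' x1 k) = (fun k _ => enc' x2 k).
  by apply: functional_extensionality_dep => k; apply: funext => _; apply: he.
have -> : (fun j' (_ : j' \in Kstar i) => x1 j') = (fun j' _ => x2 j').
  apply: functional_extensionality_dep => j'; apply: funext => h; apply: funext => t'.
  exact: hK.
by [].
Qed.

Lemma agree (x1 x2 : 'I_12 -> 'I_m -> A) : enc' x1 =1 enc' x2 ->
  (forall j, val j \notin Il -> forall t, x1 j t = x2 j t) ->
  forall j t, x1 j t = x2 j t.
Proof.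
move=> he hout.
have E0 : forall j, val j \in Wl 0 -> forall t, x1 j t = x2 j t.
  move=> j hj; apply: (@step x1 x2 (Ordinal (isT : (0 < 3)%N))) => //; last by rewrite WstarE in_setI12.
  move=> j'; rewrite KstarE in_setI12 /= => hj'; apply: hout; rewrite /=.
  by move: hj'; rewrite !inE => /or4P [] /eqP ->.
have E1 : forall j, val j \in Wl 1 -> forall t, x1 j t = x2 j t.
  move=> j hj; apply: (@step x1 x2 (Ordinal (isT : (1 < 3)%N))) => //; last by rewrite WstarE in_setI12.
  move=> j'; rewrite KstarE in_setI12 /= => hj'.
  by move: hj'; rewrite !inE => /or4P [] /eqP h; [apply: E0|apply: E0|apply: hout|apply: hout]; rewrite /= h.
have E2 : forall j, val j \in Wl 2 -> forall t, x1 j t = x2 j t.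
  move=> j hj; apply: (@step x1 x2 (Ordinal (isT : (2 < 3)%N))) => //; last by rewrite WstarE in_setI12.
  move=> j'; rewrite KstarE in_setI12 /= => hj'.
  by move: hj'; rewrite !inE => /or4P [] /eqP h; [apply: E0|apply: E0|apply: E1|apply: E1]; rewrite /= h.
move=> j.
have : [|| val j \in Wl 0, val j \in Wl 1 | val j \in Wl 2].
  by case: j {E0 E1 E2 hout} => [[|[|[|[|[|[|[|[|[|[|[|[|a]]]]]]]]]]]] ha].
by case/or3P; [apply: E0|apply: E1|apply: E2].
Qed.

Lemma rate_lb : (1 < #|A|)%N -> (7 * m <= l)%N.
Proof.
move=> hA.
have /card_gt0P [a0 _] : (0 < #|A|)%N by apply: ltn_trans hA.
pose ext (g : {ffun 'I_7 * 'I_m -> A}) (j : 'I_12) (t : 'I_m) : A :=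
  if val j \in Il then g (inord (index (val j) Il), t) else a0.
pose F (g : {ffun 'I_7 * 'I_m -> A}) : {ffun 'I_l -> A} := [ffun k => enc' (ext g) k].
have Finj : injective F.
  move=> g1 g2 /ffunP hF; apply/ffunP => [[k t]].
  have he : enc' (ext g1) =1 enc' (ext g2) by move=> k'; have := hF k'; rewrite !ffunE.
  have hext : forall g, ext g (iota7 k) t = g (k, t).
    move=> g; rewrite /ext val_iota7 mem_nth //.
    rewrite index_uniq; [by rewrite inord_val | exact: ltn_ord | by case/andP: check_Il].
  rewrite -hext -[g2 _]hext; apply: agree => // j hj t'.
  by rewrite /ext (negbTE hj).
have := @leq_card _ _ F Finj; rewrite !card_ffun card_prod !card_ord.
by rewrite leq_exp2l.
Qed.

End Lower.

Lemma rates_lb (R : realType) (b : R) : rates_locality Wstar Kstar (1 : R) b -> 7 <= b.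
Proof.
move=> [A [m [l [enc' [Rs' [dec' [hA hm hv _ ->]]]]]]].
rewrite ler_pdivlMr ?ltr0n // -[7]/(7%:R) -natrM ler_nat.
exact: (@rate_lb A m l enc' Rs' dec' hv hA).
Qed.

Theorem theorem5 (R : realType) :
  beta_star Wstar Kstar (1 : R) = frac_clique_cover_number Gstar_u R /\
  frac_clique_cover_number Gstar_u R = (clique_cover_number Gstar_u)%:R /\
  clique_cover_number Gstar_u = 7%N.
Proof.
have hb : beta_star Wstar Kstar (1 : R) = 7.
  by apply: inf_eq7; [exact: code_rate | exact: rates_lb].
by rewrite hb frac_val (ccn_val R).
Qed.
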